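(* Let $G$ be a finite simple graph of order $n$ whose odd girth is $2k+1$ for some integer $k\geq 1$. Then $\mathrm{es}_{\Delta}(G)\leq \frac{k+1}{2k+1}\,n$.
   Context: The odd girth of $G$ is the length of a shortest odd cycle in $G$. $\mathrm{es}_{\Delta}(G)$ is the minimum number of edges of $G$ whose removal results in a subgraph with maximum degree $\Delta(G)-1$. *)

(* Defs.v *)
(* A finite simple graph is a symmetric irreflexive
   relation e on a finite vertex type T. *)
From mathcomp Require Import all_boot.
Set Implicit Arguments.
Unset Strict Implicit.
Unset Printing Implicit Defensive.

Section Graph.
Variables (T : finType) (e : rel T).

Definition edges : {set {set T}} :=
  [set [set x; y] | x in T, y in T & e x y].

(* degree of v in the spanning subgraph G - F (F a set of edges) *)
Definition deg_minus (F : {set {set T}}) (v : T) : nat :=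
  #|[set y | e v y & [set v; y] \notin F]|.

Definition deg (v : T) : nat := #|[set y | e v y]|.

Definition maxdeg : nat := \max_(v : T) deg v.
Definition maxdeg_minus (F : {set {set T}}) : nat := \max_(v : T) deg_minus F v.

Definition es_Delta : nat :=
  \big[minn/#|edges|]_(F in powerset edges | maxdeg_minus F == maxdeg.-1) #|F|.

Definition has_cycle_of_length (l : nat) : Prop :=
  exists s : seq T, [/\ uniq s, size s = l, 3 <= l & cycle e s].

Definition odd_girth_is (g : nat) : Prop :=
  [/\ odd g, has_cycle_of_length g &
      forall l, odd l -> l < g -> ~ has_cycle_of_length l].

End Graph.

(* Main.v *)
Require Import Defs.
From mathcomp Require Import all_boot zify.
Set Implicit Arguments.
Unset Strict Implicit.
Unset Printing Implicit Defensive.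

Definition nbh (T : finType) (r : rel T) (A : {set T}) : {set T} :=
  [set y | [exists x in A, r x y]].

Lemma nbhP (T : finType) (r : rel T) (A : {set T}) y :
  reflect (exists2 x, x \in A & r x y) (y \in nbh r A).
Proof.
rewrite inE; apply: (iffP existsP) => [[x /andP[]]|[x xA rxy]]; first by eauto.
by exists x; rewrite xA.
Qed.

Lemma hall (T : finType) n : forall (r : rel T) (S : {set T}), #|S| <= n ->
  (forall A : {set T}, A \subset S -> #|A| <= #|nbh r A|) ->
  exists f : T -> T, {in S, forall x, r x (f x)} /\ {in S &, injective f}.
Proof.
elim: n => [|n IH] r S hS hH.
  move: hS; rewrite leqn0 cards_eq0 => /eqP ->.
  by exists id; split => x; rewrite inE.
case: (set_0Vmem S) => [-> | [x xS]].
  by exists id; split => ?; rewrite inE.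
case: (boolP [exists A : {set T}, [&& A \subset S, A != set0, A != S & #|nbh r A| <= #|A|]]).
- case/existsP => A0 /and4P [sA0 nA0 neA0 cA0].
  have ltA0 : #|A0| < #|S| by apply: proper_card; rewrite properEneq neA0.
  have [f1 [f1r f1i]] := IH r A0 ltac:(lia) (fun B sB => hH B (subset_trans sB sA0)).
  pose r2 := fun x y => r x y && (y \notin nbh r A0).
  have A0pos : 0 < #|A0| by rewrite card_gt0.
  have [f2 [f2r f2i]] : exists f : T -> T, {in S :\: A0, forall x, r2 x (f x)} /\ {in S :\: A0 &, injective f}.
    apply: IH.
      by rewrite cardsD (setIidPr sA0); lia.
    move=> B sB.
    have BA0 : B :&: A0 = set0.
      apply/eqP; rewrite -subset0; apply/subsetP => z; rewrite !inE => /andP [zB zA].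
      by have := subsetP sB z zB; rewrite !inE zA.
    have h1 := hH (B :|: A0) ltac:(by rewrite subUset sA0 andbT; exact: subset_trans sB (subsetDl S A0)).
    have h2 : nbh r (B :|: A0) \subset nbh r2 B :|: nbh r A0.
      apply/subsetP => y /nbhP [z]; rewrite inE => /orP [zB|zA] rzy; rewrite in_setU.
        case: (boolP (y \in nbh r A0)) => [yA|ny]; first by apply/orP; right.
        by apply/orP; left; apply/nbhP; exists z => //; rewrite /r2 rzy.
      by apply/orP; right; apply/nbhP; exists z.
    have h3 := subset_leq_card h2.
    have h4 := cardsUI (nbh r2 B) (nbh r A0).
    have h5 := cardsUI B A0.
    rewrite BA0 cards0 in h5.
    lia.
  exists (fun x => if x \in A0 then f1 x else f2 x); split.
    move=> z zS; case: ifP => zA; first exact: f1r.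
    by have /andP[] := f2r z ltac:(by rewrite inE zA zS).
  move=> a b aS bS; case: ifP => aA; case: ifP => bA.
  + exact: f1i.
  + move=> E; have /andP [_] := f2r b ltac:(by rewrite inE bA bS).
    by rewrite -E; case/negP; apply/nbhP; exists a => //; apply: f1r.
  + move=> E; have /andP [_] := f2r a ltac:(by rewrite inE aA aS).
    by rewrite E; case/negP; apply/nbhP; exists b => //; apply: f1r.
  + by apply: f2i; rewrite inE ?aA ?bA.
- move=> /existsPn noA.
  have : 0 < #|nbh r [set x]| by apply: leq_trans (hH _ _); rewrite ?cards1 // sub1set.
  rewrite card_gt0 => /set0Pn [y /nbhP [x']]; rewrite inE => /eqP -> rxy.
  pose r1 := fun a b => r a b && (b != y).
  have [f1 [f1r f1i]] : exists f : T -> T, {in S :\ x, forall z, r1 z (f z)} /\ {in S :\ x &, injective f}.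
    apply: IH.
      by have := cardsD1 x S; rewrite xS; lia.
    move=> B sB; case: (boolP (B == set0)) => [/eqP -> | nB]; first by rewrite cards0.
    have BS : B != S.
      apply/eqP => E; have := subsetP sB x; rewrite E xS !inE eqxx.
      by move/(_ isT).
    have := noA B; rewrite nB BS (subset_trans sB (subsetDl _ _)) /= -ltnNge => lt.
    have h1 : nbh r B :\ y \subset nbh r1 B.
      apply/subsetP => z; rewrite inE => /andP [zy /nbhP [w wB rwz]].
      apply/nbhP; exists w => //; move: zy; rewrite !inE /r1 rwz; done.
    have := subset_leq_card h1; have := cardsD1 y (nbh r B); lia.
  exists (fun a => if a == x then y else f1 a); split.
    move=> a aS; case: eqP => [-> //| ax].
    by have /andP[] := f1r a ltac:(by rewrite !inE aS andbT; apply/eqP).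
  move=> a b aS bS; case: eqP => [ax|ax]; case: eqP => [bx|bx].
  + by rewrite ax bx.
  + move=> E; have /andP [_] := f1r b ltac:(by rewrite !inE bS andbT; apply/eqP).
    by rewrite -E eqxx.
  + move=> E; have /andP [_] := f1r a ltac:(by rewrite !inE aS andbT; apply/eqP).
    by rewrite E eqxx.
  + by apply: f1i; rewrite !inE ?aS ?bS andbT; apply/eqP.
Qed.

Lemma deg_sum (T : finType) (e : rel T) x : deg e x = \sum_y (e x y : nat).
Proof.
rewrite /deg -sum1_card big_mkcond /=; apply: eq_bigr => y _; rewrite inE.
by case: (e x y).
Qed.

Lemma hall_cond (T : finType) (e : rel T) : symmetric e -> 0 < maxdeg e ->
  forall A : {set T}, A \subset [set v | deg e v == maxdeg e] -> #|A| <= #|nbh e A|.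
Proof.
move=> sym pos A sA.
rewrite -(leq_pmul2r pos) -!sum_nat_const.
have -> : \sum_(i in A) maxdeg e = \sum_(x in A) \sum_y (e x y : nat).
  apply: eq_bigr => x xA; rewrite -deg_sum.
  by have := subsetP sA x xA; rewrite inE => /eqP ->.
rewrite exchange_big /= (bigID (mem (nbh e A))) /= [X in _ + X]big1 ?addn0.
  apply: leq_sum => y yN.
  apply: (@leq_trans (\sum_x (e y x : nat))).
    rewrite [X in X <= _]big_mkcond; apply: leq_sum => x _; rewrite sym.
    by case: (x \in A).
  rewrite -deg_sum; exact: leq_bigmax.
move=> y ny; apply: big1 => x xA; apply/eqP; rewrite eqb0; apply: contra ny => exy.
by apply/nbhP; exists x.
Qed.

Lemma edge_in (T : finType) (e : rel T) x y : e x y -> [set x; y] \in edges e.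
Proof. by move=> h; apply/imset2P; exists x y => //; rewrite inE. Qed.

Lemma edge_mem (T : finType) (e : rel T) : symmetric e ->
  forall E w, E \in edges e -> w \in E -> exists2 u, e w u & E = [set w; u].
Proof.
move=> sym E w /imset2P [x y _]; rewrite inE => exy -> /set2P [->|->].
  by exists y.
by exists x; rewrite 1?sym // setUC.
Qed.

Lemma bigmin_le (I : eqType) (r : seq I) (P : pred I) (F : I -> nat) x0 j :
  j \in r -> P j -> \big[minn/x0]_(i <- r | P i) F i <= F j.
Proof.
elim: r => //= a r IH; rewrite big_cons inE => /orP [/eqP <-|jr] Pj.
  by rewrite Pj geq_minl.
case: (P a); last exact: IH.
by rewrite (leq_trans (geq_minr _ _)) // IH.
Qed.

Lemma cover_claim (T : finType) (e : rel T) (k : nat) :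
  symmetric e -> irreflexive e ->
  (forall l, odd l -> l < k.*2.+1 -> ~ has_cycle_of_length e l) ->
  forall n (D : {set T}) (f : T -> T), #|D| <= n ->
  {in D, forall x, e x (f x)} -> {in D &, injective f} ->
  exists F : {set {set T}}, [/\ F \subset edges e,
    {in D, forall v, exists2 E, E \in F & v \in E} &
    k.*2.+1 * #|F| <= k.+1 * #|D :|: f @: D|].
Proof.
move=> sym irr og n; elim: n => [|n IH] D f hD fe fi.
  move: hD; rewrite leqn0 cards_eq0 => /eqP ->.
  by exists set0; split; rewrite ?sub0set ?cards0 ?muln0 // => v; rewrite inE.
case: (set_0Vmem D) => [-> | [v0 v0D]].
  by exists set0; split; rewrite ?sub0set ?cards0 ?muln0 // => v; rewrite inE.
case: (boolP (D \subset f @: D)) => [sub | /subsetPn [v vD vnf]].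
-
  have eqD : f @: D = D.
    by apply/eqP; rewrite eq_sym eqEcard sub (card_in_imset fi) leqnn.
  have fD : forall x, x \in D -> f x \in D by move=> x xD; rewrite -eqD imset_f.
  pose g := fun x => if x \in D then f x else x.
  have gD : forall x, (g x \in D) = (x \in D).
    move=> x; rewrite /g; case: (boolP (x \in D)) => xD; first by rewrite fD.
    by rewrite (negbTE xD).
  have ginj : injective g.
    move=> x y; rewrite /g; case: (boolP (x \in D)) => xD; case: (boolP (y \in D)) => yD.
    - exact: fi.
    - by move=> E; move: yD; rewrite -E fD.
    - by move=> E; move: xD; rewrite E fD.
    - done.
  have itD : forall i, iter i g v0 \in D by elim=> //= i IHi; rewrite gD.
  pose L := order g v0.
  pose C := [set x in orbit g v0].
  have orbD : forall x, x \in orbit g v0 -> x \in D.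
    by move=> x; rewrite -fconnect_orbit => /iter_findex <-; exact: itD.
  have sC : C \subset D by apply/subsetP => x; rewrite inE; exact: orbD.
  have cC : #|C| = L by rewrite cardsE (card_uniqP (orbit_uniq g v0)) size_orbit.
  pose D' := D :\: C.
  have cD' : #|D'| = #|D| - L by rewrite cardsD (setIidPr sC) cC.
  have L0 : 0 < L := order_gt0 g v0.
  have LD : L <= #|D| by rewrite -cC subset_leq_card.
  have fD' : f @: D' \subset D'.
    apply/subsetP => y /imsetP [x xD' ->]; move: xD'; rewrite !inE => /andP [xC xD].
    rewrite fD // andbT; apply: contra xC; rewrite -!fconnect_orbit.
    have -> : f x = g x by rewrite /g xD.
    by move=> h; rewrite (same_fconnect1_r ginj).
  have [F' [F'e F'c F'b]] := IH D' f ltac:(lia) (sub_in1 (subsetP (subsetDl D C)) fe)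
    (sub_in2 (subsetP (subsetDl D C)) fi).
  rewrite (setUidPl fD') in F'b.
  pose u := uphalf L.
  pose Fc := [set [set iter i.*2 g v0; iter i.*2.+1 g v0] | i : 'I_u].
  have hFc : #|Fc| <= u by rewrite /Fc (leq_trans (leq_imset_card _ _)) // card_ord.
  have key : k.*2.+1 * u <= k.+1 * L.
    have L1 : L != 1.
      apply/eqP => L1; have := iter_order ginj v0; rewrite -/L L1 /= /g v0D => E.
      by have := fe v0 v0D; rewrite E irr.
    move: (odd_double_half L); rewrite /u uphalf_half; set h := L./2.
    case oL: (odd L) => /= EL.
      have cyc : has_cycle_of_length e L.
        exists (orbit g v0); split; [exact: orbit_uniq | exact: size_orbit | lia | ].
        have hsub : {in D &, subrel (frel g) e}.
          by move=> x y xD _ /eqP <-; rewrite /g xD; exact: fe.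
        apply: (sub_in_cycle hsub); first by apply/allP => x; exact: orbD.
        exact: cycle_orbit ginj v0.
      have : ~~ (L < k.*2.+1) by apply/negP => lt; exact: og L oL lt cyc.
      rewrite -leqNgt => hL.
      nia.
    nia.
  exists (Fc :|: F'); split.
  + rewrite subUset F'e andbT; apply/subsetP => E /imsetP [i _ ->].
    rewrite -[iter i.*2.+1 g v0]/(g (iter i.*2 g v0)) /g itD /=.
    by apply: edge_in; apply: fe; exact: itD.
  + move=> w wD; case: (boolP (w \in C)) => wC.
      move: wC; rewrite inE /orbit => /trajectP [j jL ->].
      have ju : j./2 < u by rewrite /u; lia.
      exists [set iter (j./2).*2 g v0; iter (j./2).*2.+1 g v0].
        by rewrite in_setU; apply/orP; left; apply/imsetP; exists (Ordinal ju).
      move: (odd_double_half j); set h := j./2.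
      by case: (odd j) => E; rewrite -E ?add1n ?add0n !inE eqxx ?orbT.
    have wD' : w \in D' by rewrite inE wC wD.
    have [E EF wE] := F'c w wD'.
    by exists E => //; rewrite in_setU EF orbT.
  + rewrite eqD setUid.
    have hU := cardsUI Fc F'.
    apply: (@leq_trans (k.*2.+1 * (u + #|F'|))).
      rewrite leq_mul2l; apply/orP; right; apply: (@leq_trans (#|Fc| + #|F'|)); first by rewrite -hU leq_addr.
      by rewrite leq_add2r.
    rewrite mulnDr; apply: leq_trans (leq_add key F'b) _.
    rewrite -mulnDr leq_mul2l cD'; apply/orP; right.
    lia.
-
  pose D' := D :\: [set v; f v].
  have sD' : D' \subset D by apply: subsetDl.
  have ltD : #|D'| < #|D|.
    apply: proper_card; rewrite properE sD' /=; apply/subsetPn; exists v => //.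
    by rewrite !inE eqxx.
  have [F' [F'e F'c F'b]] := IH D' f ltac:(lia) (sub_in1 (subsetP sD') fe)
    (sub_in2 (subsetP sD') fi).
  have vfv : v != f v by apply/eqP => E; have := fe v vD; rewrite -E irr.
  exists ([set v; f v] |: F'); split.
  + by rewrite subUset sub1set F'e edge_in // fe.
  + move=> u uD; case: (boolP (u \in [set v; f v])) => uv.
      by exists [set v; f v] => //; rewrite setU11.
    have [E EF uE] := F'c u ltac:(by rewrite inE uv uD).
    by exists E => //; rewrite setU1r.
  + have hsub : D' :|: f @: D' \subset (D :|: f @: D) :\: [set v; f v].
      apply/subsetP => z; rewrite in_setU => /orP [zD'|].
        move: zD'; rewrite !inE => /andP [-> ->]; done.
      case/imsetP => x xD' ->.
      have xD := subsetP sD' x xD'.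
      rewrite in_setD [f x \in D :|: _]in_setU (imset_f f xD) orbT andbT !inE.
      apply/negP => /orP [/eqP E|/eqP E].
        by move: vnf; rewrite -E (imset_f f xD).
      by move: xD'; rewrite (fi _ _ xD vD E) !inE eqxx.
    have h1 := subset_leq_card hsub.
    have h2 : [set v; f v] \subset D :|: f @: D.
      by rewrite subUset !sub1set !inE vD (imset_f f vD) orbT.
    rewrite cardsD (setIidPr h2) cards2 vfv in h1.
    have h3 := cardsU1 [set v; f v] F'.
    simpl in h1.
    have h5 : 2 <= #|D :|: f @: D| by have := subset_leq_card h2; rewrite cards2 vfv.
    have h6 : (([set v; f v] \notin F') : nat) <= 1 by case: (_ \notin _).
    rewrite h3; apply: (@leq_trans (k.*2.+1 * (1 + #|F'|))).
      by rewrite leq_mul2l leq_add2r h6 orbT.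
    apply: (@leq_trans (k.+1 * (2 + #|D' :|: f @: D'|))); last first.
      by rewrite leq_mul2l; apply/orP; right; lia.
    rewrite !mulnDr; apply: leq_add => //; lia.
Qed.

Unset Implicit Arguments.
Set Strict Implicit.

Theorem theorem3p3 (T : finType) (e : rel T) (k : nat) :
  symmetric e -> irreflexive e -> 1 <= k ->
  odd_girth_is e k.*2.+1 ->
  k.*2.+1 * es_Delta e <= k.+1 * #|T|.
Proof.
move=> sym irr k1 [oddg [s [us szs l3 cs]] og].
have [x [y exy]] : exists x y, e x y.
  move: us szs cs; case: s => [|x [|y s']] /=; try by move=> _ E; move: l3; rewrite -E.
  by move=> _ _ /andP [h _]; exists x, y.
have pos : 0 < maxdeg e.
  have : 0 < deg e x by rewrite /deg card_gt0; apply/set0Pn; exists y; rewrite inE.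
  move=> h; apply: (leq_trans h); rewrite /maxdeg.
  exact: (@leq_bigmax _ (fun v => deg e v) x).
set D := maxdeg e in pos *.
pose S := [set v | deg e v == D].
have [v0 Ev0] : {i0 | \max_(i : T) deg e i = deg e i0}.
  by apply: eq_bigmax; apply/card_gt0P; exists x.
have v0S : v0 \in S by rewrite inE -Ev0.
have [f [fe fi]] := hall (leqnn #|S|) (hall_cond sym pos).
have [F [Fe Fc Fb]] := cover_claim sym irr og (leqnn #|S|) fe fi.
have FT : k.*2.+1 * #|F| <= k.+1 * #|T|.
  by apply: leq_trans Fb _; rewrite leq_mul2l max_card orbT.
pose cov := fun G : {set {set T}} => [forall v in S, [exists E in G, v \in E]].
have covF : (F \subset F) && cov F.
  rewrite subxx /=; apply/forall_inP => v vS; have [E EF vE] := Fc v vS.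
  by apply/exists_inP; exists E.
case: (@arg_minnP _ F (fun G => (G \subset F) && cov G) (fun G => #|G|) covF).
move=> F' /andP [sF' cF'] minF'.
apply: leq_trans FT; rewrite leq_mul2l; apply/orP; right.
apply: (@leq_trans #|F'|); last exact: subset_leq_card sF'.
have F'edges : F' \subset edges e := subset_trans sF' Fe.
have cov' : forall v, v \in S -> exists2 E, E \in F' & v \in E.
  by move=> v vS; have /exists_inP [E EF vE] := forall_inP cF' v vS; exists E.
have upper : forall v, deg_minus e F' v <= D.-1.
  move=> v; case vS: (v \in S).
    have [E EF vE] := cov' v vS.
    have [u evu Eeq] := edge_mem sym (subsetP F'edges E EF) vE.
    have sub : [set y | e v y & [set v; y] \notin F'] \subset [set y | e v y] :\ u.
      apply/subsetP => z; rewrite !inE => /andP [evz nz]; rewrite evz andbT.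
      by apply/eqP => zu; move: nz; rewrite zu -Eeq EF.
    have h := cardsD1 u [set y | e v y]; rewrite in_set evu in h.
    have h2 := subset_leq_card sub.
    move: vS; rewrite inE /deg => /eqP dv.
    by rewrite /deg_minus -dv h add1n /=.
  have sub : [set y | e v y & [set v; y] \notin F'] \subset [set y | e v y].
    by apply/subsetP => z; rewrite !inE => /andP [].
  have h2 := subset_leq_card sub.
  have h3 : deg e v <= D by rewrite /D /maxdeg; exact: (@leq_bigmax _ (fun v => deg e v) v).
  move: vS; rewrite inE => /negbT dv.
  rewrite /deg_minus; apply: leq_trans h2 _; rewrite -ltnS prednK //.
  by rewrite ltn_neqAle dv h3.
have [E0 E0F _] := cov' v0 v0S.
have ncov : ~~ cov (F' :\ E0).
  apply/negP => c.
  have := minF' (F' :\ E0) ltac:(by rewrite (subset_trans (subsetDl _ _) sF') c).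
  have := cardsD1 E0 F'; rewrite E0F => h1 h2.
  by rewrite h1 add1n ltnn in h2.
move/forall_inPn: ncov => [w wS /exists_inPn nE].
have [E EF wE] := cov' w wS.
have EE0 : E = E0.
  apply/eqP; apply: contraTT wE => ne; apply: nE; by rewrite !inE ne EF.
have [u ewu Eeq] := edge_mem sym (subsetP F'edges E EF) wE.
have hw : [set y | e w y & [set w; y] \notin F'] = [set y | e w y] :\ u.
  apply/setP => z; rewrite !inE; case: (boolP (e w z)) => ewz; rewrite ?andbF ?andbT //.
  apply/idP/idP.
    by apply: contraNneq => ->; rewrite -Eeq.
  move=> zu; apply/negP => zF.
  case: (eqVneq [set w; z] E0) => [h|h]; last first.
    by have := nE [set w; z] ltac:(by rewrite !inE h zF); rewrite set21.
  have : z \in [set w; u] by rewrite -Eeq EE0 -h set22.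
  rewrite !inE => /orP [/eqP zw | /eqP zu'].
    by move: ewz; rewrite zw irr.
  by move: zu; rewrite zu' eqxx.
have dw : deg_minus e F' w = D.-1.
  rewrite /deg_minus hw.
  have h := cardsD1 u [set y | e w y]; rewrite in_set ewu in h.
  by move: wS; rewrite inE /deg => /eqP dv; rewrite -dv h add1n.
apply: (bigmin_le (P := fun G => (G \in powerset (edges e)) && (maxdeg_minus e G == D.-1))).
  exact: mem_index_enum.
rewrite powersetE F'edges /= eqn_leq; apply/andP; split.
  by apply/bigmax_leqP => v _; exact: upper.
rewrite /maxdeg_minus -dw; exact: (@leq_bigmax _ (fun v => deg_minus e F' v) w).
Qed.
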